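(* Let $M$ be a smooth compact manifold with the distance $d$ induced by a Riemannian metric, and let $\omega:\Lambda\times M\to M$ be an IFS (with $\Lambda$ a compact metric space) that is topologically stable. Then $\omega$ has the concordant shadowing property.
   Context: An IFS with phase space $M$ is given by a compact metric space $\Lambda$ and a continuous map $\omega:\Lambda\times M\to M$; write $\omega_\lambda=\omega(\lambda,\cdot)$. $C^0(M)$ denotes the continuous self-maps of $M$ with $d_{C^0}(f,g)=\max_{x}d(f(x),g(x))$. For two IFS $\omega$ (parameter space $\Lambda$) and $\tilde\omega$ (parameter space $\tilde\Lambda$) on $M$, $d_H(\omega,\tilde\omega)$ denotes the Hausdorff distance in $(C^0(M),d_{C^0})$ between the sets $\{\omega_\lambda:\lambda\in\Lambda\}$ and $\{\tilde\omega_\lambda:\lambda\in\tilde\Lambda\}$. For $\sigma=(\lambda_1,\lambda_2,\dots)\in\Lambda^{\mathbb N}$, set $\omega_{\sigma_0}=\mathrm{id}$ and $\omega_{\sigma_k}=\omega_{\lambda_k}\circ\cdots\circ\omega_{\lambda_1}$. A sequence $\{x_k\}_{k\ge0}$ is a $\delta$-chain with sequence of parameters $\sigma=(\lambda_1,\lambda_2,\dots)$ if $d(x_k,\omega_{\lambda_k}(x_{k-1}))\le\delta$ for all $k\ge1$. The IFS has the concordant shadowing property if for every $\varepsilon>0$ there is $\delta>0$ such that for every $\delta$-chain $\{x_k\}$ with sequence of parameters $\sigma$ there is $y\in M$ with $d(x_k,\omega_{\sigma_k}(y))<\varepsilon$ for all $k\ge0$. Given IFS $\omega,\tilde\omega$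 and sequences $\sigma=(\lambda_k)$ in $\Lambda$, $\tilde\sigma=(\tilde\lambda_k)$ in $\tilde\Lambda$ of the same length, the pair $(\sigma,\tilde\sigma)$ is $\delta$-compatible if $d_{C^0}(\omega_{\lambda_k},\tilde\omega_{\tilde\lambda_k})<\delta$ for all $k$. The IFS $\omega$ is topologically stable if for every $\varepsilon>0$ there is $\delta>0$ such that whenever $\tilde\omega$ is an IFS on $M$ (with any compact metric parameter space $\tilde\Lambda$) with $d_H(\omega,\tilde\omega)\le\delta$, then for every $\delta$-compatible pair $(\sigma,\tilde\sigma)\in\Lambda^{\mathbb N}\times\tilde\Lambda^{\mathbb N}$ there is a continuous $h:M\to M$ with $d_{C^0}(\omega_{\sigma_k}\circ h,\tilde\omega_{\tilde\sigma_k})<\varepsilon$ for all $k\in\mathbb N$ and $d_{C^0}(h,\mathrm{id})<\varepsilon$. *)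

(* Defs.v *)
From HB Require Import structures.
From mathcomp Require Import all_boot all_order all_algebra.
From mathcomp Require Import all_classical all_reals all_analysis.
Set Implicit Arguments. Unset Strict Implicit. Unset Printing Implicit Defensive.
Import Order.TTheory GRing.Theory Num.Theory.
Import numFieldNormedType.Exports.
Local Open Scope classical_set_scope.
Local Open Scope ring_scope.

(* Smooth compact manifolds, realised (Nash / Whitney) as compact embedded    *)
(* C^oo submanifolds of R^N = 'rV[R]_N, with the Riemannian distance of the   *)
(* induced metric, i.e. the intrinsic (length) distance.                      *)

Definition eucl {R : realType} {N : nat} (v : 'rV[R]_N) : R :=
  Num.sqrt (\sum_(i < N) v ord0 i ^+ 2).

Fixpoint iterD {R : realType} {k N : nat} (vs : seq 'rV[R]_k)
    (f : 'rV[R]_k -> 'rV[R]_N) : 'rV[R]_k -> 'rV[R]_N :=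
  match vs with
  | [::] => f
  | v :: vs' => fun x => derive (iterD vs' f) x v
  end.

Definition smooth_on {R : realType} {k N : nat} (U : set 'rV[R]_k)
    (f : 'rV[R]_k -> 'rV[R]_N) : Prop :=
  forall (vs : seq 'rV[R]_k) (x : 'rV[R]_k), U x -> differentiable (iterD vs f) x.

Definition embedded_submanifold {R : realType} (N k : nat) (M : set 'rV[R]_N)
  : Prop :=
  forall p, M p ->
    exists (U : set 'rV[R]_k) (V : set 'rV[R]_N)
           (phi : 'rV[R]_k -> 'rV[R]_N) (psi : 'rV[R]_N -> 'rV[R]_k),
      [/\ open U, open V & V p] /\
      smooth_on U phi /\
      (forall u, U u -> forall w : 'rV[R]_k, 'd phi u w = 0 -> w = 0) /\
      phi @` U = M `&` V /\
      (forall u, U u -> psi (phi u) = u) /\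
      {within M `&` V, continuous psi}.

Arguments embedded_submanifold {R} N k M.

Definition curve_length {R : realType} {N : nat} (gamma : R -> 'rV[R]_N)
  : \bar R :=
  ereal_sup [set s : \bar R | exists (n : nat) (t : nat -> R),
     [/\ t 0%N = 0, t n = 1, (forall i, (i < n)%N -> t i <= t i.+1) &
         s = (\sum_(i < n) eucl (gamma (t i.+1) - gamma (t i)))%:E]].

(* Riemannian (intrinsic) distance on M induced by the Euclidean metric; it *)
(* is +oo between points of different connected components.                 *)
Definition mdistM {R : realType} {N : nat} (M : set 'rV[R]_N)
    (x y : 'rV[R]_N) : \bar R :=
  ereal_inf [set curve_length gamma | gamma in
    [set gamma : R -> 'rV[R]_N |
       [/\ {within `[0, 1], continuous gamma},
           (forall t, 0 <= t <= 1 -> M (gamma t)),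
           gamma 0 = x & gamma 1 = y]]].

Local Open Scope ereal_scope.

Definition dC0 {R : realType} {N : nat} (M : set 'rV[R]_N)
    (f g : 'rV[R]_N -> 'rV[R]_N) : \bar R :=
  ereal_sup [set mdistM M (f x) (g x) | x in M].

Definition C0map {R : realType} {N : nat} (M : set 'rV[R]_N)
    (f : 'rV[R]_N -> 'rV[R]_N) : Prop :=
  (forall x, M x -> M (f x)) /\
  (forall x, M x -> forall e : R, (0 < e)%R -> exists2 d : R, (0 < d)%R &
     forall x', M x' -> mdistM M x x' < d%:E -> mdistM M (f x) (f x') < e%:E).

Definition IFS {R : realType} {N : nat} (M : set 'rV[R]_N) (L : metricType R)
    (omega : L -> 'rV[R]_N -> 'rV[R]_N) : Prop :=
  compact [set: L] /\
  (forall l x, M x -> M (omega l x)) /\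
  (forall l x, M x -> forall e : R, (0 < e)%R -> exists2 d : R, (0 < d)%R &
     forall l' x', M x' -> (mdist l l' < d)%R -> mdistM M x x' < d%:E ->
       mdistM M (omega l x) (omega l' x') < e%:E).

(* omega_{sigma_k}: sigma = (sigma 0, sigma 1, ...) = (lambda_1, lambda_2, ...) *)
Fixpoint compo {L : Type} {X : Type} (omega : L -> X -> X) (sigma : nat -> L)
    (k : nat) (x : X) : X :=
  match k with
  | 0%N => x
  | k'.+1 => omega (sigma k') (compo omega sigma k' x)
  end.

Definition delta_chain {R : realType} {N : nat} (M : set 'rV[R]_N) {L : Type}
    (omega : L -> 'rV[R]_N -> 'rV[R]_N) (delta : R) (x : nat -> 'rV[R]_N)
    (sigma : nat -> L) : Prop :=
  (forall k, M (x k)) /\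
  (forall k, mdistM M (x k.+1) (omega (sigma k) (x k)) <= delta%:E).

Definition concordant_shadowing {R : realType} {N : nat} (M : set 'rV[R]_N)
    {L : Type} (omega : L -> 'rV[R]_N -> 'rV[R]_N) : Prop :=
  forall eps : R, (0 < eps)%R -> exists2 delta : R, (0 < delta)%R &
    forall x sigma, delta_chain M omega delta x sigma ->
      exists2 y, M y & forall k, mdistM M (x k) (compo omega sigma k y) < eps%:E.

(* Hausdorff distance between {omega_l} and {omega'_l'} in (C^0(M), d_C0)   *)
(* is at most delta (sup-inf formulation, in both directions).              *)
Definition dH_le {R : realType} {N : nat} (M : set 'rV[R]_N) {L L' : Type}
    (omega : L -> 'rV[R]_N -> 'rV[R]_N) (omega' : L' -> 'rV[R]_N -> 'rV[R]_N)
    (delta : R) : Prop :=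
  (forall l (eta : R), (0 < eta)%R -> exists l', dC0 M (omega l) (omega' l') < (delta + eta)%:E) /\
  (forall l' (eta : R), (0 < eta)%R -> exists l, dC0 M (omega l) (omega' l') < (delta + eta)%:E).

Definition topologically_stable {R : realType} {N : nat} (M : set 'rV[R]_N)
    {L : Type} (omega : L -> 'rV[R]_N -> 'rV[R]_N) : Prop :=
  forall eps : R, (0 < eps)%R -> exists2 delta : R, (0 < delta)%R &
    forall (L' : metricType R) (omega' : L' -> 'rV[R]_N -> 'rV[R]_N),
      IFS M omega' -> dH_le M omega omega' delta ->
      forall (sigma : nat -> L) (sigma' : nat -> L'),
        (forall k, dC0 M (omega (sigma k)) (omega' (sigma' k)) < delta%:E) ->
        exists h, [/\ C0map M h,
          (forall k, dC0 M (compo omega sigma k \o h) (compo omega' sigma' k) < eps%:E) &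
          dC0 M h id < eps%:E].

(* Main.v *)
Require Import Defs.
From HB Require Import structures.
From mathcomp Require Import all_boot all_order all_algebra.
From mathcomp Require Import all_classical all_reals all_analysis.
From mathcomp Require Import ring lra.
Set Implicit Arguments. Unset Strict Implicit. Unset Printing Implicit Defensive.
Import Order.TTheory GRing.Theory Num.Theory.
Import numFieldNormedType.Exports.
Local Open Scope classical_set_scope.
Local Open Scope ring_scope.

Definition ordR (R : realType) (n : nat) : Type := 'I_n.
HB.instance Definition _ R n := Choice.on (ordR R n).

Section ordR_metric.
Variables (R : realType) (n : nat).
Definition ord_dist (i j : ordR R n) : R := (i != j)%:R.
Lemma ord_dist_xx i : ord_dist i i = 0. Proof. by rewrite /ord_dist eqxx. Qed.
Lemma ord_dist_pos i j : ord_dist i j = 0 -> i = j.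
Proof. by rewrite /ord_dist; case: eqP => // _ /eqP; rewrite oner_eq0. Qed.
Lemma ord_dist_sym i j : ord_dist i j = ord_dist j i.
Proof. by rewrite /ord_dist eq_sym. Qed.
Lemma ord_dist_tri j i k : ord_dist i k <= ord_dist i j + ord_dist j k.
Proof.
rewrite /ord_dist; case: (eqVneq i k) => [->|ik] /=; first by rewrite addr_ge0.
case: (eqVneq i j) => [<-|_] /=; first by rewrite ik add0r.
by rewrite lerDl.
Qed.
HB.instance Definition _ := @isMetric.Build R (ordR R n) ord_dist
  ord_dist_xx ord_dist_pos ord_dist_sym ord_dist_tri.
End ordR_metric.

Section prod_metric.
Variables (R : realType) (A B : metricType R).
Definition pdist (x y : (A * B)%type) : R := Num.max (mdist x.1 y.1) (mdist x.2 y.2).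
Lemma pdist_ge0 x y : 0 <= pdist x y.
Proof. by rewrite /pdist le_max mdist_ge0. Qed.
Lemma pdist_pos x y : pdist x y = 0 -> x = y.
Proof.
case: x y => [a b] [c d]; rewrite /pdist /= => h.
have h1 : mdist a c = 0.
  by apply/eqP; rewrite eq_le mdist_ge0 andbT -h le_max lexx.
have h2 : mdist b d = 0.
  by apply/eqP; rewrite eq_le mdist_ge0 andbT -h le_max lexx orbT.
by rewrite (mdist_positivity _ _ h1) (mdist_positivity _ _ h2).
Qed.
Lemma pballE x e : ball x e = [set y | pdist x y < e].
Proof.
apply/seteqP; split => y /=.
  by case=> /=; rewrite !ballEmdist /= => h1 h2; rewrite /pdist gt_max h1 h2.
by rewrite /pdist gt_max => /andP[h1 h2]; split; rewrite ballEmdist.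
Qed.
HB.instance Definition _ := @PseudoMetric_isMetric.Build R (A * B)%type pdist
  pdist_ge0 pdist_pos pballE.
End prod_metric.

Lemma compact_prod_ord (R : realType) (L : metricType R) n :
  compact [set: L] -> compact [set: (L * ordR R n)%type].
Proof.
move=> cL; rewrite -setXTT; apply: compact_setX => //.
apply: finite_compact; exact: (@finite_finset 'I_n setT).
Qed.

Lemma mdist_prodE (R : realType) (L : metricType R) n (x y : (L * ordR R n)%type) :
  mdist x y = Num.max (mdist x.1 y.1) (mdist x.2 y.2).
Proof. by []. Qed.

Lemma mdist_ordE (R : realType) n (i j : ordR R n) : mdist i j = (i != j)%:R.
Proof. by []. Qed.

Section Eucl.
Variables (R : realType) (N : nat).
Implicit Types (u v : 'rV[R]_N).

Lemma sq_le_nonneg (x y : R) : 0 <= x -> 0 <= y -> x ^+ 2 <= y ^+ 2 -> x <= y.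
Proof.
move=> x0 y0 h; rewrite -(ger0_norm x0) -(ger0_norm y0) -!sqrtr_sqr.
exact: ler_wsqrtr.
Qed.

Lemma eucl_ge0 v : 0 <= eucl v. Proof. exact: sqrtr_ge0. Qed.

Lemma euclN v : eucl (- v) = eucl v.
Proof. rewrite /eucl; congr Num.sqrt; apply: eq_bigr => i _; by rewrite mxE sqrrN. Qed.

Lemma euclB u v : eucl (u - v) = eucl (v - u).
Proof. by rewrite -euclN opprB. Qed.

Lemma eucl_coord v i : `|v ord0 i| <= eucl v.
Proof.
rewrite /eucl -sqrtr_sqr ler_wsqrtr // (bigD1 i) //= lerDl sumr_ge0 // => j _.
exact: sqr_ge0.
Qed.

Lemma norm_le_eucl v : `|v| <= eucl v.
Proof.
rewrite -[`|v|]/(mx_norm v) mx_normrE; apply/bigmax_leP; split; first exact: eucl_ge0.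
by move=> [a b] _ /=; rewrite (ord1 a); exact: eucl_coord.
Qed.

Lemma eucl_l1 v : eucl v <= \sum_i `|v ord0 i|.
Proof.
have T0 : 0 <= \sum_i `|v ord0 i| by apply: sumr_ge0 => i _.
apply: sq_le_nonneg => //; first exact: eucl_ge0.
rewrite sqr_sqrtr; last by apply: sumr_ge0 => i _; exact: sqr_ge0.
rewrite expr2 mulr_suml; apply: ler_sum => i _.
rewrite -real_normK ?num_real // expr2 ler_wpM2l //.
by rewrite (bigD1 i) //= lerDl sumr_ge0.
Qed.

Lemma CS (a b : 'I_N -> R) :
  (\sum_i a i * b i) ^+ 2 <= (\sum_i a i ^+ 2) * (\sum_i b i ^+ 2).
Proof.
have E : \sum_i \sum_j (a i * b j - a j * b i) ^+ 2 =
   2 * ((\sum_i a i ^+ 2) * (\sum_i b i ^+ 2) - (\sum_i a i * b i) ^+ 2).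
  transitivity (\sum_i \sum_j (a i ^+ 2 * b j ^+ 2) + \sum_i \sum_j (a j ^+ 2 * b i ^+ 2)
     - 2 * \sum_i \sum_j ((a i * b i) * (a j * b j))).
    rewrite mulr_sumr -big_split /= -sumrB; apply: eq_bigr => i _.
    rewrite mulr_sumr -big_split /= -sumrB; apply: eq_bigr => j _; ring.
  rewrite (exchange_big _ _ _ _ _ (fun i j => a j ^+ 2 * b i ^+ 2)) /=.
  rewrite -!big_distrlr /= expr2.
  ring.
have : 0 <= \sum_i \sum_j (a i * b j - a j * b i) ^+ 2.
  by apply: sumr_ge0 => i _; apply: sumr_ge0 => j _; exact: sqr_ge0.
rewrite E pmulr_rge0 // subr_ge0 //.
Qed.

Lemma eucl_triangle u v : eucl (u + v) <= eucl u + eucl v.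
Proof.
have Su : 0 <= \sum_i u ord0 i ^+ 2 by apply: sumr_ge0 => i _; exact: sqr_ge0.
have Sv : 0 <= \sum_i v ord0 i ^+ 2 by apply: sumr_ge0 => i _; exact: sqr_ge0.
apply: sq_le_nonneg; [exact: eucl_ge0| by rewrite addr_ge0 // eucl_ge0|].
rewrite /eucl sqr_sqrtr; last by apply: sumr_ge0 => i _; exact: sqr_ge0.
rewrite sqrrD !sqr_sqrtr //.
have -> : \sum_i (u + v) ord0 i ^+ 2 = \sum_i u ord0 i ^+ 2 + \sum_i v ord0 i ^+ 2
   + 2 * \sum_i (u ord0 i * v ord0 i).
  rewrite mulr_sumr -!big_split /=; apply: eq_bigr => i _; rewrite mxE; ring.
suff H : \sum_i u ord0 i * v ord0 i <=
    Num.sqrt (\sum_i u ord0 i ^+ 2) * Num.sqrt (\sum_i v ord0 i ^+ 2).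
  rewrite mulr2n mulrDl !mul1r; lra.
rewrite (le_trans (real_ler_norm _)) ?num_real //.
rewrite -sqrtrM // -sqrtr_sqr ler_wsqrtr //.
exact: CS.
Qed.

End Eucl.

Section Curves.
Variables (R : realType) (N : nat) (M : set 'rV[R]_N).
Local Notation d := (mdistM M).
Implicit Types (g : R -> 'rV[R]_N) (x y z : 'rV[R]_N).

Lemma within01P (g : R -> 'rV[R]_N) : {within `[0, 1], continuous g} <->
  (forall t, 0 <= t <= 1 -> forall e, 0 < e -> exists2 dl, 0 < dl &
     forall s, 0 <= s <= 1 -> `|s - t| < dl -> `|g s - g t| < e).
Proof.
rewrite subspace_continuousP; split.
  move=> h t t01 e e0.
  have /cvgrPdist_lt /(_ e e0) := h t (t01 : [set` `[0, 1]] t).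
  rewrite /within nearE => /nbhs_ballP [dl dl0 H]; exists dl => // s s01 st.
  rewrite distrC; apply: (H s) => //.
  by rewrite /ball /= distrC.
move=> h t t01; apply/cvgrPdist_lt => e e0.
have [dl dl0 H] := h t t01 e e0.
rewrite /within nearE; apply/nbhs_ballP; exists dl => // s st s01.
by rewrite distrC; apply: H => //; rewrite distrC.
Qed.

Definition vcurve (g : R -> 'rV[R]_N) (x y : 'rV[R]_N) : Prop :=
  [/\ {within `[0, 1], continuous g}, (forall t, 0 <= t <= 1 -> M (g t)),
      g 0 = x & g 1 = y].

Lemma d_le_curve g x y : vcurve g x y -> (d x y <= curve_length g)%E.
Proof. by move=> h; apply: ereal_inf_lbound; exists g. Qed.

Lemma d_lt_curve x y (a : \bar R) : (d x y < a)%E ->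
  exists g, vcurve g x y /\ (curve_length g < a)%E.
Proof. by move=> /ereal_inf_lt [_ [g hg <-] h]; exists g. Qed.

Lemma cl_le g (c : R) : (forall n (t : nat -> R), t 0%N = 0 -> t n = 1 ->
    (forall i, (i < n)%N -> t i <= t i.+1) ->
    \sum_(i < n) eucl (g (t i.+1) - g (t i)) <= c) ->
  (curve_length g <= c%:E)%E.
Proof.
move=> h; apply: ge_ereal_sup => _ [n [t [t0 tn tm ->]]]; rewrite lee_fin.
exact: h.
Qed.

Lemma cl_ge g n (t : nat -> R) : t 0%N = 0 -> t n = 1 ->
  (forall i, (i < n)%N -> t i <= t i.+1) ->
  ((\sum_(i < n) eucl (g (t i.+1) - g (t i)))%:E <= curve_length g)%E.
Proof. by move=> t0 tn tm; apply: ereal_sup_ubound; exists n, t; split. Qed.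

Lemma cl_chord g : ((eucl (g 1 - g 0))%:E <= curve_length g)%E.
Proof.
pose t := fun i : nat => if i is 0%N then (0 : R) else 1.
have := @cl_ge g 1 t erefl erefl.
by rewrite big_ord1 /=; apply => i; rewrite ltnS leqn0 => /eqP -> /=.
Qed.

Lemma cl_ge0 g : (0 <= curve_length g)%E.
Proof. by apply: le_trans (cl_chord g); rewrite lee_fin eucl_ge0. Qed.

Lemma d_chord x y : ((eucl (y - x))%:E <= d x y)%E.
Proof.
rewrite leNgt; apply/negP => /d_lt_curve [g [[_ _ g0 g1] h]].
by move: (cl_chord g); rewrite g0 g1 => /(lt_le_trans h); rewrite ltxx.
Qed.

Lemma d_ge0 x y : (0 <= d x y)%E.
Proof. by apply: le_trans (d_chord x y); rewrite lee_fin eucl_ge0. Qed.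

Lemma d_lt_eucl x y (a : R) : (d x y < a%:E)%E -> eucl (y - x) < a.
Proof. by move=> h; rewrite -lte_fin; exact: le_lt_trans (d_chord x y) h. Qed.

Lemma d_lt_norm x y (a : R) : (d x y < a%:E)%E -> `|y - x| < a.
Proof. by move=> /d_lt_eucl; apply: le_lt_trans; exact: norm_le_eucl. Qed.

Lemma eucl0 : eucl (0 : 'rV[R]_N) = 0.
Proof.
rewrite /eucl (eq_bigr (fun _ => 0)) ?big1 ?sqrtr0 // => i _.
by rewrite mxE expr0n.
Qed.

Lemma d_xx x : M x -> d x x = 0.
Proof.
move=> Mx; apply/le_anti; rewrite d_ge0 andbT.
apply: (@le_trans _ _ (curve_length (fun _ => x))).
  apply: d_le_curve; split => //; exact: continuous_subspaceT (@cst_continuous _ _ x).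
apply: cl_le => n t _ _ _; rewrite big1 // => i _; by rewrite subrr eucl0.
Qed.

Lemma cl_rev g : (curve_length (fun t : R => g (1 - t)%R) <= curve_length g)%E.
Proof.
apply: ge_ereal_sup => _ [n [t [t0 tn tm ->]]].
pose t' := fun i : nat => 1 - t (n - i)%N.
have -> : \sum_(i < n) eucl (g (1 - t i.+1) - g (1 - t i)) =
          \sum_(i < n) eucl (g (t' i.+1) - g (t' i)).
  rewrite (reindex_inj rev_ord_inj) /=; apply: eq_bigr => i _.
  rewrite /t' euclB; have ilt := ltn_ord i.
  by rewrite subnSK.
apply: cl_ge.
- by rewrite /t' subn0 tn subrr.
- by rewrite /t' subnn t0 subr0.
- move=> i ilt; rewrite /t' lerD2l lerN2.
  have -> : (n - i = (n - i.+1).+1)%N by rewrite subnSK.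
  by apply: tm; rewrite subnSK // leq_subr.
Qed.

Lemma d_sym_lt x y (a : R) : (d x y < a%:E)%E -> (d y x < a%:E)%E.
Proof.
move=> /d_lt_curve [g [[gc gM g0 g1] h]].
apply: (le_lt_trans _ (le_lt_trans (cl_rev g) h)); apply: d_le_curve; split.
- apply/within01P => t t01 e e0.
  have t01' : 0 <= 1 - t <= 1 by move: t01 => /andP[? ?]; apply/andP; split; lra.
  have [dl dl0 H] := (within01P g).1 gc _ t01' e e0.
  exists dl => // s s01 st.
  apply: H; first by move: s01 => /andP[? ?]; apply/andP; split; lra.
  by rewrite (_ : 1 - s - (1 - t) = t - s); [rewrite distrC|ring].
- by move=> t /andP[? ?]; apply: gM; apply/andP; split; lra.
- by rewrite subr0.
- by rewrite subrr.
Qed.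

Lemma min_lip (a b c : R) : `|Num.min a c - Num.min b c| <= `|a - b|.
Proof.
have := lexx `|a - b|; rewrite {1}ler_norml => /andP[h1 h2].
rewrite ler_norml.
by case: (leP a c) => ac; case: (leP b c) => bc; apply/andP; split; lra.
Qed.

Lemma max_lip (a b c : R) : `|Num.max a c - Num.max b c| <= `|a - b|.
Proof.
have := lexx `|a - b|; rewrite {1}ler_norml => /andP[h1 h2].
rewrite ler_norml.
by case: (leP a c) => ac; case: (leP b c) => bc; apply/andP; split; lra.
Qed.

Lemma min_mono (a b c : R) : a <= b -> Num.min a c <= Num.min b c.
Proof. by move=> ab; case: (leP a c) => ac; case: (leP b c) => bc; lra. Qed.

Lemma max_mono (a b c : R) : a <= b -> Num.max a c <= Num.max b c.
Proof. by move=> ab; case: (leP a c) => ac; case: (leP b c) => bc; lra. Qed.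

Lemma min01 (t : R) : 0 <= t <= 1 -> 0 <= Num.min (2 * t) 1 <= 1.
Proof. by move=> /andP[? ?]; case: (leP (2 * t) 1) => h; apply/andP; split; lra. Qed.

Lemma max01 (t : R) : 0 <= t <= 1 -> 0 <= Num.max (2 * t - 1) 0 <= 1.
Proof. by move=> /andP[? ?]; case: (leP (2 * t - 1) 0) => h; apply/andP; split; lra. Qed.

Lemma cl_fin g (a : R) : (curve_length g < a%:E)%E ->
  exists2 r : R, curve_length g = r%:E & r < a.
Proof.
move: (cl_ge0 g); case: (curve_length g) => [r| |] //= _.
by rewrite lte_fin => h; exists r.
Qed.

Lemma d_tri_lt x y z (a b : R) : (d x y < a%:E)%E -> (d y z < b%:E)%E ->
  (d x z < (a + b)%:E)%E.
Proof.
move=> /d_lt_curve [g1 [[c1 M1 g10 g11] /cl_fin [r1 e1 h1]]].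
move=> /d_lt_curve [g2 [[c2 M2 g20 g21] /cl_fin [r2 e2 h2]]].
pose gc := fun t : R => g1 (Num.min (2 * t) 1) + g2 (Num.max (2 * t - 1) 0) - y.
have dif s t : gc s - gc t = (g1 (Num.min (2 * s) 1) - g1 (Num.min (2 * t) 1)) +
    (g2 (Num.max (2 * s - 1) 0) - g2 (Num.max (2 * t - 1) 0)).
  rewrite /gc opprB addrA subrK opprD addrACA //.
have vc : vcurve gc x z.
  split.
  - apply/within01P => t t01 e e0.
    have e20 : 0 < e / 2 by rewrite divr_gt0.
    have [dl1 dl10 H1] := (within01P g1).1 c1 _ (min01 t01) _ e20.
    have [dl2 dl20 H2] := (within01P g2).1 c2 _ (max01 t01) _ e20.
    exists (Num.min dl1 dl2 / 2); first by rewrite divr_gt0 // lt_min dl10 dl20.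
    move=> s s01 st; rewrite dif.
    apply: (le_lt_trans (ler_normD _ _)).
    have hs : `|2 * s - 2 * t| < Num.min dl1 dl2.
      by rewrite -mulrBr normrM ger0_norm //; lra.
    move: hs; rewrite lt_min => /andP[hs1 hs2].
    rewrite (splitr e); apply: ltrD.
    + apply: H1; first exact: min01.
      exact: le_lt_trans (min_lip _ _ _) hs1.
    + apply: H2; first exact: max01.
      apply: le_lt_trans (max_lip _ _ _) _.
      by rewrite (_ : 2 * s - 1 - (2 * t - 1) = 2 * s - 2 * t) //; ring.
  - move=> t t01; rewrite /gc; case: (leP (2 * t - 1) 0) => h.
      by rewrite g20 addrK; apply: M1; exact: min01.
    have -> : Num.min (2 * t) 1 = 1 by case: leP => ?; lra.
    rewrite g11 [y + _]addrC addrK; apply: M2.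
    by move: t01 => /andP[? ?]; apply/andP; split; lra.
  - rewrite /gc mulr0 sub0r.
    have -> : Num.min (0 : R) 1 = 0 by case: leP => ?; lra.
    have -> : Num.max (-1 : R) 0 = 0 by case: leP => ?; lra.
    by rewrite g10 g20 addrK.
  - rewrite /gc mulr1.
    have -> : Num.min (2 : R) 1 = 1 by case: leP => ?; lra.
    have -> : Num.max (2 - 1 : R) 0 = 1 by case: leP => ?; lra.
    by rewrite g11 g21 [y + _]addrC addrK.
apply: (le_lt_trans (d_le_curve vc)).
apply: (@le_lt_trans _ _ (r1 + r2)%:E); last by rewrite lte_fin ltrD.
apply: cl_le => n t t0 tn tm.
pose s := fun i => Num.min (2 * t i) 1; pose s' := fun i => Num.max (2 * t i - 1) 0.
have S1 := @cl_ge g1 n s.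
have S2 := @cl_ge g2 n s'.
rewrite e1 lee_fin in S1; rewrite e2 lee_fin in S2.
apply: le_trans (_ : \sum_(i < n) eucl (g1 (s i.+1) - g1 (s i)) +
                     \sum_(i < n) eucl (g2 (s' i.+1) - g2 (s' i)) <= r1 + r2).
  rewrite -big_split /=; apply: ler_sum => i _; rewrite dif; exact: eucl_triangle.
apply: lerD.
  apply: S1; rewrite /s ?t0 ?tn ?mulr0 ?mulr1.
  - by case: leP => ?; lra.
  - by case: leP => ?; lra.
  - by move=> i ilt; apply: min_mono; have := tm i ilt; lra.
apply: S2; rewrite /s' ?t0 ?tn ?mulr0 ?mulr1.
- by case: leP => ?; lra.
- by case: leP => ?; lra.
- by move=> i ilt; apply: max_mono; have := tm i ilt; lra.
Qed.
End Curves.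

Section Line.
Variables (R : realType) (k N : nat).

Lemma line_is_derive (f : 'rV[R]_k -> 'rV[R]_N) (x0 w : 'rV[R]_k) (t : R) i :
  derivable f (x0 + t *: w) w ->
  is_derive t 1 (fun s : R => f (x0 + s *: w) ord0 i) ('D_w f (x0 + t *: w) ord0 i).
Proof.
move=> df.
set a := x0 + t *: w.
set G := (fun h : R => h^-1 *: (((fun s : R => f (x0 + s *: w) ord0 i) \o shift t) (h *: 1)
            - f (x0 + t *: w) ord0 i)).
have E : G = (fun M : 'rV[R]_N => M ord0 i) \o
             (fun h : R => h^-1 *: ((f \o shift a) (h *: w) - f a)).
  apply: funext => h /=; rewrite !mxE /a; congr (_ * (f _ _ _ - _)).
  by rewrite /shift /= [h%:A]mulr1 scalerDl addrCA addrC.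
have C : G @ 0^' --> ('D_w f a) ord0 i.
  rewrite E; apply: (@cvg_comp _ _ _ _ _ _ (nbhs ('D_w f a))); first exact: df.
  exact: coord_continuous.
split; first by apply/cvg_ex; exists ('D_w f a ord0 i).
by rewrite /derive -/G; apply: cvg_lim.
Qed.

Lemma entry_le_norm m n (A : 'M[R]_(m, n)) i j : `|A i j| <= `|A|.
Proof. rewrite -[`|A|]/(mx_norm A) mx_normrE; exact: (le_bigmax _ _ (i, j)). Qed.

Lemma dir_bound (phi : 'rV[R]_k -> 'rV[R]_N) x w i : differentiable phi x ->
  `|('D_w phi x) ord0 i| <= `|w| * \sum_j `|'D_(delta_mx ord0 j) phi x|.
Proof.
move=> dx; rewrite deriveE //.
rewrite {1}(matrix_sum_delta w) big_ord1 linear_sum /= mulr_sumr.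
rewrite summxE; apply: le_trans (ler_norm_sum _ _ _) _; apply: ler_sum => j _.
rewrite linearZ /= mxE normrM -deriveE //.
by apply: ler_pM => //; exact: entry_le_norm.
Qed.

Lemma lipschitz_chart (U : set 'rV[R]_k) (phi : 'rV[R]_k -> 'rV[R]_N) (u0 : 'rV[R]_k) :
  open U -> smooth_on U phi -> U u0 ->
  exists r0 : R, exists C : R, [/\ 0 < r0, 0 <= C, ball u0 r0 `<=` U &
    forall u v, ball u0 r0 u -> ball u0 r0 v -> eucl (phi v - phi u) <= C * `|v - u|].
Proof.
move=> oU sm Uu0.
pose e j : 'rV[R]_k := delta_mx ord0 j.
pose B := \sum_j (`|'D_(e j) phi u0| + 1).
have B0 : 0 <= B by apply: sumr_ge0 => j _; rewrite addr_ge0.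
have nU : nbhs u0 U by apply: open_nbhs_nbhs; split.
have near1 : \forall x \near u0,
    U x /\ forall j, `|'D_(e j) phi x| <= `|'D_(e j) phi u0| + 1.
  near=> x; split; first by near: x.
  near: x; apply: filter_forall => j.
  have ctsj : {for u0, continuous (fun x => 'D_(e j) phi x)}.
    exact: differentiable_continuous (sm [:: e j] u0 Uu0).
  move/cvgrPdist_lt : ctsj => /(_ 1 ltr01).
  apply: filter_app; near=> x => hx.
  have h := ler_normD ('D_(e j) phi u0) ('D_(e j) phi x - 'D_(e j) phi u0).
  rewrite addrC subrK distrC in h.
  apply: (le_trans h); rewrite lerD2l; exact: ltW.
move/nbhs_ballP: near1 => [r r0 hr].
exists r, (N%:R * B); split => //.
- by rewrite mulr_ge0 // ler0n.
- by move=> x /hr [].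
move=> u v bu bv; set w := v - u.
have conv s : 0 <= s <= 1 -> ball u0 r (u + s *: w).
  move=> /andP[s0 s1]; move: bu bv; rewrite -!ball_normE /ball_ /= => bu bv.
  have -> : u0 - (u + s *: w) = (1 - s) *: (u0 - u) + s *: (u0 - v).
    by apply/rowP => j; rewrite !mxE; ring.
  apply: le_lt_trans (ler_normD _ _) _.
  rewrite !mx_normZ (ger0_norm s0) ger0_norm; last by lra.
  set a := `|u0 - u|; set b := `|u0 - v|.
  have hm1 : a <= Num.max a b by rewrite le_max lexx.
  have hm2 : b <= Num.max a b by rewrite le_max lexx orbT.
  have hm : Num.max a b < r by rewrite gt_max bu bv.
  have h1 : (1 - s) * a <= (1 - s) * Num.max a b by rewrite ler_wpM2l //; lra.
  have h2 : s * b <= s * Num.max a b by rewrite ler_wpM2l.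
  lra.
have hU s : 0 <= s <= 1 -> U (u + s *: w) by move=> /conv /hr [].
have hD s : 0 <= s <= 1 -> \sum_j `|'D_(e j) phi (u + s *: w)| <= B.
  by move=> /conv /hr [_ hb]; apply: ler_sum => j _; exact: hb.
apply: le_trans (eucl_l1 _) _.
apply: le_trans (_ : \sum_(i < N) (B * `|w|) <= _); last first.
  by rewrite sumr_const card_ord -mulrA mulr_natl.
apply: ler_sum => i _.
pose h := fun s : R => phi (u + s *: w) ord0 i.
have hd (s : R) : 0 <= s <= 1 -> is_derive s 1 h ('D_w phi (u + s *: w) ord0 i).
  move=> s01; apply: line_is_derive; apply: diff_derivable; exact: sm [::] _ (hU s s01).
have hcont : {within `[0, 1], continuous h}.
  apply: continuous_in_subspaceT => s; rewrite inE /= in_itv /= => s01.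
  have [dv _] := hd s s01.
  by apply: differentiable_continuous; exact/derivable1_diffP.
have hd' : forall s : R, s \in `]0, 1[ -> is_derive s 1 h ('D_w phi (u + s *: w) ord0 i).
  move=> s; rewrite in_itv /= => /andP[a b]; apply: hd; apply/andP; split; exact: ltW.
have [c c01 hc] := @MVT_segment R h (fun s => 'D_w phi (u + s *: w) ord0 i) 0 1 ler01
  hd' hcont.
have -> : (phi v - phi u) ord0 i = h 1 - h 0.
  by rewrite /h !mxE scale1r scale0r addr0 /w [u + _]addrC subrK.
rewrite hc subr0 mulr1.
move: c01; rewrite in_itv /= => c01.
apply: le_trans (dir_bound w i (sm [::] _ (hU c c01))) _.
by rewrite mulrC ler_wpM2r // hD.
Unshelve. all: by end_near.
Qed.
End Line.

Section Seg.
Variables (R : realType) (k N : nat) (M : set 'rV[R]_N).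

Lemma ball_conv (u0 u v : 'rV[R]_k) r s : ball u0 r u -> ball u0 r v -> 0 <= s <= 1 ->
  ball u0 r (u + s *: (v - u)).
Proof.
move=> bu bv /andP[s0 s1]; move: bu bv; rewrite -!ball_normE /ball_ /= => bu bv.
have -> : u0 - (u + s *: (v - u)) = (1 - s) *: (u0 - u) + s *: (u0 - v).
  by apply/rowP => j; rewrite !mxE; ring.
apply: le_lt_trans (ler_normD _ _) _.
rewrite !mx_normZ (ger0_norm s0) ger0_norm; last by lra.
set a := `|u0 - u|; set b := `|u0 - v|.
have hm1 : a <= Num.max a b by rewrite le_max lexx.
have hm2 : b <= Num.max a b by rewrite le_max lexx orbT.
have hm : Num.max a b < r by rewrite gt_max bu bv.
have h1 : (1 - s) * a <= (1 - s) * Num.max a b by rewrite ler_wpM2l //; lra.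
have h2 : s * b <= s * Num.max a b by rewrite ler_wpM2l.
lra.
Qed.

Lemma part_range (t : nat -> R) n : t 0%N = 0 -> t n = 1 ->
  (forall i, (i < n)%N -> t i <= t i.+1) -> forall i, (i <= n)%N -> 0 <= t i <= 1.
Proof.
move=> t0 tn tm.
have up : forall i, (i <= n)%N -> 0 <= t i.
  elim=> [|i IH] hi; first by rewrite t0.
  apply: le_trans (IH (ltnW hi)) (tm i hi).
have dn : forall j i, (i + j = n)%N -> t i <= 1.
  elim=> [|j IH] i hij; first by rewrite -tn -hij addn0.
  apply: le_trans (tm i _) (IH i.+1 _); first by rewrite -hij addnS ltnS leq_addr.
  by rewrite addSnnS.
move=> i hi; rewrite up //=; apply: (dn (n - i)%N); exact: subnKC.
Qed.

Lemma seg_dist (phi : 'rV[R]_k -> 'rV[R]_N) u0 r C :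
  0 <= C -> (forall u, ball u0 r u -> M (phi u)) ->
  (forall u v, ball u0 r u -> ball u0 r v -> eucl (phi v - phi u) <= C * `|v - u|) ->
  forall u v, ball u0 r u -> ball u0 r v ->
  (mdistM M (phi u) (phi v) <= (C * `|v - u|)%:E)%E.
Proof.
move=> C0 hM hL u v bu bv.
set w := v - u.
pose g := fun t : R => phi (u + t *: w).
have dif a b : (u + b *: w) - (u + a *: w) = (b - a) *: w.
  by apply/rowP => j; rewrite !mxE; ring.
have bt t : 0 <= t <= 1 -> ball u0 r (u + t *: w) by exact: ball_conv.
apply: (le_trans (d_le_curve (g := g) _)).
  split.
  - apply/within01P => t t01 e e0.
    exists (e / (C * `|w| + 1)).
      by rewrite divr_gt0 // ltr_pwDr // mulr_ge0.
    move=> s s01 st.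
    apply: le_lt_trans (norm_le_eucl _) _.
    apply: le_lt_trans (hL _ _ (bt _ t01) (bt _ s01)) _.
    rewrite dif mx_normZ.
    have w0 : 0 <= `|w| by [].
    rewrite ltr_pdivlMr ?ltr_pwDr ?mulr_ge0 // in st.
    have h1 : C * (`|s - t| * `|w|) <= `|s - t| * (C * `|w|).
      by rewrite mulrCA.
    have h2 : `|s - t| * (C * `|w|) <= `|s - t| * (C * `|w| + 1).
      by rewrite ler_wpM2l // lerDl.
    lra.
  - by move=> t t01; apply: hM; exact: bt.
  - by rewrite /g scale0r addr0.
  - by rewrite /g scale1r /w [u + _]addrC subrK.
apply: cl_le => n t t0 tn tm.
have tr := part_range t0 tn tm.
apply: le_trans (_ : \sum_(i < n) (C * `|w|) * (t i.+1 - t i) <= _).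
  apply: ler_sum => i _.
  have hi := ltn_ord i.
  apply: le_trans (hL _ _ (bt _ (tr _ (ltnW hi))) (bt _ (tr _ hi))) _.
  rewrite dif mx_normZ ger0_norm; last by rewrite subr_ge0 tm.
  by rewrite le_eqVlt; apply/orP; left; apply/eqP; ring.
rewrite -mulr_sumr -(big_mkord xpredT (fun i => t i.+1 - t i)) telescope_sumr //.
by rewrite tn t0 subr0 mulr1.
Qed.
End Seg.

Section Eps.
Variables (R : realType) (a b : nat).

Lemma within_eps (A : set 'rV[R]_a) (f : 'rV[R]_a -> 'rV[R]_b) x :
  {within A, continuous f} -> A x -> forall e, 0 < e ->
  exists2 th, 0 < th & forall z, A z -> `|x - z| < th -> `|f x - f z| < e.
Proof.
move=> /subspace_continuousP h Ax e e0.
have /cvgrPdist_lt /(_ e e0) := h x Ax.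
rewrite /within nearE => /nbhs_ballP [th th0 H]; exists th => // z Az xz.
by apply: (H z) => //; rewrite -ball_normE.
Qed.

Lemma cont_eps (f : 'rV[R]_a -> 'rV[R]_b) x :
  {for x, continuous f} -> forall e, 0 < e ->
  exists2 th, 0 < th & forall z, `|x - z| < th -> `|f x - f z| < e.
Proof.
move=> /cvgrPdist_lt h e e0; have := h e e0.
rewrite nearE => /nbhs_ballP [th th0 H]; exists th => // z xz.
by apply: (H z); rewrite -ball_normE.
Qed.

Lemma open_eps (V : set 'rV[R]_a) x : open V -> V x ->
  exists2 th, 0 < th & forall z, `|x - z| < th -> V z.
Proof.
move=> oV Vx; have : nbhs x V by apply: open_nbhs_nbhs; split.
move=> /nbhs_ballP [th th0 H]; exists th => // z xz.
by apply: H; rewrite -ball_normE.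
Qed.
End Eps.

Section Chart.
Variables (R : realType) (N k : nat) (M : set 'rV[R]_N).
Local Notation d := (mdistM M).
Hypothesis emb : embedded_submanifold N k M.

Lemma chart_local p : M p ->
  exists (V : set 'rV[R]_N) (phi : 'rV[R]_k -> 'rV[R]_N) (psi : 'rV[R]_N -> 'rV[R]_k)
         (r C : R),
  [/\ open V, V p, 0 < r, 0 <= C &
  [/\ forall u, ball (psi p) r u -> [/\ M (phi u), V (phi u) & psi (phi u) = u],
      forall x, M x -> V x -> phi (psi x) = x,
      {within M `&` V, continuous psi},
      forall u v, ball (psi p) r u -> ball (psi p) r v ->
        (d (phi u) (phi v) <= (C * `|v - u|)%:E)%E &
      forall u, ball (psi p) r u -> {for u, continuous phi}]].
Proof.
move=> Mp; have [U [V [phi [psi [[oU oV Vp] [sm [_ [img [inv cpsi]]]]]]]]] := emb Mp.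
have : (M `&` V) p by [].
rewrite -img => -[u1 Uu1 pu1].
have psip : psi p = u1 by rewrite -pu1 inv.
have [r [C [r0 C0 bU hL]]] := lipschitz_chart oU sm Uu1.
have hb u : ball (psi p) r u -> [/\ M (phi u), V (phi u) & psi (phi u) = u].
  rewrite psip => /bU Uu.
  have : (M `&` V) (phi u) by rewrite -img; exists u.
  by move=> [? ?]; split => //; exact: inv.
exists V, phi, psi, r, C; split => //; split => //.
- move=> x Mx Vx; have : (M `&` V) x by [].
  by rewrite -img => -[u Uu <-]; rewrite inv.
- move=> u v bu bv; apply: seg_dist => //.
  + by move=> w /hb [].
  + by move=> w w'; rewrite psip; exact: hL.
  + exact: bu.
  + exact: bv.
- move=> u; rewrite psip => /bU Uu.
  exact: differentiable_continuous (sm [::] _ Uu).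
Qed.

Lemma loc_d p e : M p -> 0 < e ->
  exists2 tau, 0 < tau & forall z, M z -> `|p - z| < tau ->
    (d p z < e%:E)%E /\ (d z p < e%:E)%E.
Proof.
move=> Mp e0.
have [V [phi [psi [r [C [oV Vp r0 C0 [hb hinv cpsi hd _]]]]]]] := chart_local Mp.
pose eta := Num.min r (e / (C + 1)).
have eta0 : 0 < eta by rewrite lt_min r0 divr_gt0 // ltr_pwDr.
have [th1 th10 H1] := within_eps cpsi (conj Mp Vp) eta0.
have [th2 th20 H2] := open_eps oV Vp.
exists (Num.min th1 th2); first by rewrite lt_min th10 th20.
move=> z Mz; rewrite lt_min => /andP[z1 z2].
have Vz := H2 _ z2.
have hz := H1 z (conj Mz Vz) z1.
have bz : ball (psi p) r (psi z).
  by rewrite -ball_normE /=; apply: lt_le_trans hz _; rewrite ge_min lexx.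
have bp : ball (psi p) r (psi p) by exact: ballxx.
have key : C * `|psi p - psi z| < e.
  have h1 : `|psi p - psi z| < e / (C + 1).
    by apply: lt_le_trans hz _; rewrite ge_min lexx orbT.
  rewrite ltr_pdivlMr ?ltr_pwDr // in h1.
  have h2 : C * `|psi p - psi z| <= (C + 1) * `|psi p - psi z|.
    by rewrite ler_wpM2r // lerDl.
  lra.
have ep : phi (psi p) = p by exact: hinv.
have ez : phi (psi z) = z by exact: hinv.
split.
  rewrite -ep -ez; apply: le_lt_trans (hd _ _ bp bz) _.
  by rewrite lte_fin distrC.
rewrite -ep -ez; apply: le_lt_trans (hd _ _ bz bp) _.
by rewrite lte_fin.
Qed.
End Chart.

Section Pert.
Variables (R : realType) (N k : nat) (M : set 'rV[R]_N).
Local Notation d := (mdistM M).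
Hypothesis emb : embedded_submanifold N k M.

Definition pert (a b : 'rV[R]_N) (rho : R) (f : 'rV[R]_N -> 'rV[R]_N) :=
  [/\ C0map M f, f a = b & forall x, M x -> (d x (f x) < rho%:E)%E].

Lemma C0map_of_eucl (f : 'rV[R]_N -> 'rV[R]_N) : (forall x, M x -> M (f x)) ->
  (forall x, M x -> forall t, 0 < t -> exists2 th, 0 < th &
     forall x', M x' -> `|x - x'| < th -> `|f x - f x'| < t) -> C0map M f.
Proof.
move=> fM fc; split => // x Mx e e0.
have [tq tq0 Hq] := loc_d emb (fM x Mx) e0.
have [th th0 H] := fc x Mx tq tq0.
exists th => // x' Mx' /d_lt_norm hx.
have hx' : `|x - x'| < th by rewrite distrC.
by have [h _] := Hq (f x') (fM _ Mx') (H x' Mx' hx').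
Qed.

Lemma local_pert rho p : 0 < rho -> M p -> exists2 tau, 0 < tau &
  forall a b, M a -> M b -> `|p - a| < tau -> `|a - b| < tau ->
  exists f, pert a b rho f.
Proof.
move=> rho0 Mp.
have [V [phi [psi [r [C [oV Vp r0 C0 [hb hinv cpsi hd cphi]]]]]]] := chart_local emb Mp.
pose eta := Num.min (r / 3) (rho / (4 * (C + 1))).
have C1 : 0 < C + 1 by rewrite ltr_pwDr.
have eta0 : 0 < eta by rewrite lt_min !divr_gt0 // mulr_gt0.
have etar : 3 * eta <= r.
  have : eta <= r / 3 by rewrite ge_min lexx.
  by rewrite ler_pdivlMr // mulrC.
have etarho : C * (2 * eta) < rho.
  have : eta <= rho / (4 * (C + 1)) by rewrite ge_min lexx orbT.
  rewrite ler_pdivlMr ?mulr_gt0 // => h.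
  have h2 : C * eta <= (C + 1) * eta by rewrite ler_wpM2r ?lerDl // ltW.
  have h3 : eta * (4 * (C + 1)) = 4 * ((C + 1) * eta) by ring.
  rewrite h3 in h.
  have h4 : C * (2 * eta) = 2 * (C * eta) by ring.
  rewrite h4; lra.
have [th1 th10 H1] := within_eps cpsi (conj Mp Vp) eta0.
have [th2 th20 H2] := open_eps oV Vp.
pose tau' := Num.min th1 th2.
have tau'0 : 0 < tau' by rewrite lt_min th10 th20.
pose tau := tau' / 2.
have tau0 : 0 < tau by rewrite divr_gt0.
exists tau => // a b Ma Mb pa ab.
have ZV z : M z -> `|p - z| < tau' -> V z /\ `|psi p - psi z| < eta.
  move=> Mz; rewrite lt_min => /andP[z1 z2]; have Vz := H2 _ z2.
  by split => //; exact: H1.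
have pa' : `|p - a| < tau' by apply: lt_le_trans pa _; rewrite /tau ler_pdivrMr // ler_pMr // ler1n.
have pb : `|p - b| < tau'.
  apply: le_lt_trans (ler_distD a p b) _.
  by rewrite (splitr tau'); apply: ltrD.
have [Va hpa] := ZV a Ma pa'.
have [Vb hpb] := ZV b Mb pb.
pose D := psi b - psi a.
have Dlt : `|D| < 2 * eta.
  apply: le_lt_trans (ler_distD (psi p) _ _) _.
  by rewrite distrC mulr2n mulrDl mul1r; apply: ltrD.
pose be := fun x => Num.max (1 - `|a - x| / tau) 0.
have be01 x : 0 <= be x <= 1.
  rewrite /be le_max lexx orbT /=; rewrite ge_max ler01 andbT.
  by rewrite lerBlDr lerDl divr_ge0 // ltW.
pose f := fun x => if `|p - x| < tau' then phi (psi x + be x *: D) else x.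
have bD x : `|be x *: D| <= 2 * eta.
  rewrite mx_normZ ger0_norm; last by case/andP: (be01 x).
  have [? ?] := andP (be01 x).
  apply: le_trans (_ : 1 * `|D| <= _); last by rewrite mul1r ltW.
  by rewrite ler_wpM2r.
have inball x : M x -> `|p - x| < tau' -> ball (psi p) r (psi x + be x *: D).
  move=> Mx hx; have [_ hpx] := ZV x Mx hx.
  rewrite -ball_normE /= opprD addrA.
  apply: le_lt_trans (ler_normB _ _) _.
  have := bD x; lra.
have ball_x x : M x -> `|p - x| < tau' -> ball (psi p) r (psi x).
  move=> Mx hx; have [_ hpx] := ZV x Mx hx.
  by rewrite -ball_normE /=; lra.
exists f; split.
- apply: C0map_of_eucl.
    move=> x Mx; rewrite /f; case: ifP => h //.
    by have [] := hb _ (inball x Mx h).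
  move=> x Mx t t0.
  case: (boolP (`|p - x| < tau')) => hx.
  + have [Vx _] := ZV x Mx hx.
    have [thp thp0 Hp] := cont_eps (cphi _ (inball x Mx hx)) t0.
    have thp20 : 0 < thp / 2 by rewrite divr_gt0.
    have [ths ths0 Hs] := within_eps cpsi (conj Mx Vx) thp20.
    have D1 : 0 < 2 * (`|D| + 1) by rewrite mulr_gt0 // ltr_pwDr.
    pose thb := thp * tau / (2 * (`|D| + 1)).
    have thb0 : 0 < thb by rewrite divr_gt0 // mulr_gt0.
    exists (Num.min (tau' - `|p - x|) (Num.min ths thb)).
      by rewrite !lt_min subr_gt0 hx ths0 thb0.
    move=> x' Mx'; rewrite !lt_min => /andP[h1 /andP[h2 h3]].
    have hx' : `|p - x'| < tau'.
      have := ler_distD x p x'; lra.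
    have [Vx' _] := ZV x' Mx' hx'.
    rewrite /f hx hx'.
    apply: Hp.
    have -> : psi x + be x *: D - (psi x' + be x' *: D) =
              (psi x - psi x') + (be x - be x') *: D.
      by apply/rowP => j; rewrite !mxE; ring.
    apply: le_lt_trans (ler_normD _ _) _.
    have hs := Hs x' (conj Mx' Vx') h2.
    have hb' : `|be x - be x'| <= `|x - x'| / tau.
      apply: le_trans (max_lip _ _ _) _.
      rewrite (_ : 1 - `|a - x| / tau - (1 - `|a - x'| / tau) =
                   (`|a - x'| - `|a - x|) / tau); last by field; exact: lt0r_neq0.
      have ti : 0 <= tau^-1 by rewrite invr_ge0 ltW.
      rewrite normrM (ger0_norm ti).
      rewrite ler_wpM2r //.
      have h := ler_dist_dist (a - x') (a - x).
      have e : a - x' - (a - x) = x - x' by apply/rowP => j; rewrite !mxE; ring.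
      by rewrite e in h.
    rewrite mx_normZ.
    set q := `|x - x'| / tau.
    have q0 : 0 <= q by rewrite divr_ge0 // ltW.
    have hq : q * (2 * (`|D| + 1)) < thp.
      by rewrite /q mulrAC ltr_pdivrMr // -ltr_pdivlMr.
    have hbD : `|be x - be x'| * `|D| <= q * `|D| by rewrite ler_wpM2r.
    have hq2 : q * (2 * (`|D| + 1)) = 2 * (q * `|D|) + 2 * q by ring.
    rewrite hq2 in hq.
    rewrite (splitr thp); lra.
  + have hx2 : tau' <= `|p - x| by rewrite leNgt.
    have e2 : tau' = tau + tau by rewrite /tau -splitr.
    have ax : tau < `|a - x| by have := ler_distD a p x; lra.
    exists (Num.min (`|a - x| - tau) t); first by rewrite lt_min subr_gt0 ax t0.
    move=> x' Mx'; rewrite lt_min => /andP[h1 h2].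
    have ax' : tau < `|a - x'|.
      by have := ler_distD x' a x; rewrite (distrC x' x); lra.
    have bx' : be x' = 0.
      rewrite /be; have : 1 - `|a - x'| / tau < 0.
        by rewrite subr_lt0 ltr_pdivlMr // mul1r.
      by case: leP => ?; lra.
    rewrite /f (negbTE hx); case: ifP => h' //.
    have [Vx' _] := ZV x' Mx' h'.
    by rewrite bx' scale0r addr0 hinv.
- rewrite /f pa'.
  have -> : be a = 1.
    rewrite /be subrr normr0 mul0r subr0.
    by case: leP => ?; lra.
  by rewrite scale1r /D addrC subrK hinv.
- move=> x Mx; rewrite /f; case: ifP => h; last by rewrite d_xx // lte_fin.
  have [Vx _] := ZV x Mx h.
  rewrite -{1}(hinv x Mx Vx).
  apply: le_lt_trans (hd _ _ (ball_x x Mx h) (inball x Mx h)) _.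
  rewrite lte_fin [psi x + _]addrC addrK.
  apply: le_lt_trans etarho; exact: ler_wpM2l (bD x).
Qed.

Lemma min_seq (T : eqType) (s : seq T) (g : T -> R) :
  (forall p, p \in s -> 0 < g p) -> exists2 del, 0 < del & forall p, p \in s -> del <= g p.
Proof.
elim: s => [|p s IH] h; first by exists 1.
have h' : forall q, q \in s -> 0 < g q by move=> q qs; apply: h; rewrite inE qs orbT.
have [del del0 H] := IH h'.
exists (Num.min del (g p)); first by rewrite lt_min del0 h ?mem_head.
move=> q; rewrite inE => /orP[/eqP ->|qs]; first by rewrite ge_min lexx orbT.
by rewrite ge_min H.
Qed.

Lemma glob_pert rho : 0 < rho -> compact M -> exists2 del, 0 < del &
  forall a b, M a -> M b -> `|a - b| < del -> exists f, pert a b rho f.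
Proof.
move=> rho0 cM.
have /choice [tau Htau] : forall p, exists t : R, M p -> (0 < t /\
    forall a b, M a -> M b -> `|p - a| < t -> `|a - b| < t -> exists f, pert a b rho f).
  move=> p; case: (pselect (M p)) => Mp.
    by have [t t0 H] := local_pert rho0 Mp; exists t => _; split.
  by exists 1 => /Mp.
move: cM; rewrite compact_cover => /(_ _ M (fun p => ball p (tau p))).
case.
- by move=> i _; exact: ball_open.
- move=> x Mx; exists x => //; apply: ballxx; by case: (Htau x Mx).
move=> D' D'M cov.
have [del del0 H] := @min_seq _ (finmap.enum_fset D') tau (fun p pD => (Htau p (set_mem (D'M p pD))).1).
exists del => // a b Ma Mb ab.
have [p pD bpa] := cov a Ma.
have Mp := set_mem (D'M p pD).
have [_ Hp] := Htau p Mp.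
apply: Hp => //; first by move: bpa; rewrite -ball_normE.
exact: lt_le_trans ab (H p pD).
Qed.
End Pert.

Section Main.
Variables (R : realType) (N : nat) (M : set 'rV[R]_N).
Local Notation d := (mdistM M).

Lemma dC0_le (f g : 'rV[R]_N -> 'rV[R]_N) (c : R) :
  (forall z, M z -> (d (f z) (g z) <= c%:E)%E) -> (dC0 M f g <= c%:E)%E.
Proof. by move=> h; apply: ge_ereal_sup => _ [z Mz <-]; exact: h. Qed.

Lemma dC0_pt (f g : 'rV[R]_N -> 'rV[R]_N) z : M z -> (d (f z) (g z) <= dC0 M f g)%E.
Proof. by move=> Mz; apply: ereal_sup_ubound; exists z. Qed.

Lemma C0map_id : C0map M id.
Proof. by split => // x Mx e e0; exists e. Qed.

Lemma compo_M (L : Type) (om : L -> 'rV[R]_N -> 'rV[R]_N) s :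
  (forall l z, M z -> M (om l z)) -> forall j z, M z -> M (compo om s j z).
Proof. by move=> h; elim=> [|j IH] z Mz //=; apply: h; exact: IH. Qed.

Lemma compo_cont (L : metricType R) (om : L -> 'rV[R]_N -> 'rV[R]_N) s :
  IFS M om -> forall j y, M y -> forall e, 0 < e ->
  exists2 th, 0 < th & forall z, M z -> (d y z < th%:E)%E ->
    (d (compo om s j y) (compo om s j z) < e%:E)%E.
Proof.
move=> [_ [hM hc]]; elim=> [|j IH] y My e e0 /=.
  by exists e.
have [th1 th10 H1] := hc (s j) (compo om s j y) (compo_M s hM j My) e e0.
have [th2 th20 H2] := IH y My th1 th10.
exists th2 => // z Mz dz.
apply: H1; [exact: compo_M | by rewrite mdistxx | exact: H2].
Qed.

Theorem main (k : nat) (L : metricType R) (omega : L -> 'rV[R]_N -> 'rV[R]_N) :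
  embedded_submanifold N k M -> compact M ->
  IFS M omega -> topologically_stable M omega ->
  concordant_shadowing M omega.
Proof.
move=> emb cM ifs ts eps eps0.
have eps20 : 0 < eps / 2 by rewrite divr_gt0.
have [ds ds0 Hs] := ts _ eps20.
have ds20 : 0 < ds / 2 by rewrite divr_gt0.
have [del0 del00 Hp] := glob_pert emb ds20 cM.
have [_ [omM omc]] := ifs.
exists (del0 / 2); first by rewrite divr_gt0.
move=> x sigma [xM xch].
have : forall m, exists f, pert M (omega (sigma m) (x m)) (x m.+1) (ds / 2) f.
  move=> m; apply: Hp; [exact: omM | exact: xM |].
  have h : (d (x m.+1) (omega (sigma m) (x m)) < del0%:E)%E.
    by apply: le_lt_trans (xch m) _; rewrite lte_fin; lra.
  exact: d_lt_norm h.
move=> /choice [Phi HPhi].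
have Yn : forall n, exists y, M y /\ forall j, (j <= n)%N ->
    (d (compo omega sigma j y) (x j) < (eps / 2)%:E)%E.
  move=> n.
  pose Fi := fun i : ordR R n.+1 => if nat_of_ord i is m.+1 then Phi m else id.
  have FiC i : C0map M (Fi i).
    by rewrite /Fi; case: (nat_of_ord i) => [|m]; [exact: C0map_id | case: (HPhi m)].
  have Fimv i z : M z -> (d z (Fi i z) <= (ds / 2)%:E)%E.
    move=> Mz; rewrite /Fi; case: (nat_of_ord i) => [|m] /=.
      by rewrite d_xx // lee_fin ltW.
    by case: (HPhi m) => _ _ /(_ z Mz) /ltW.
  pose om' := fun (l : (L * ordR R n.+1)%type) z => Fi l.2 (omega l.1 z).
  pose sig' := fun m : nat =>
    (sigma m, (if (m < n)%N then inord m.+1 else ord0) : ordR R n.+1).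
  have ifs' : IFS M om'.
    split; first exact: compact_prod_ord ifs.1.
    split.
      by move=> [l i] z Mz; rewrite /om' /=; apply: (FiC i).1; exact: omM.
    move=> [l i] z Mz e e0.
    have [th1 th10 H1] := (FiC i).2 _ (omM l z Mz) e e0.
    have [th2 th20 H2] := omc l z Mz th1 th10.
    exists (Num.min th2 1); first by rewrite lt_min th20 ltr01.
    move=> [l' i'] z' Mz' hll hzz.
    move: hll; rewrite lt_min mdist_prodE !gt_max /= => /andP[/andP[hl _] /andP[_ hi]].
    have ii : i = i'.
      by move: hi; rewrite mdist_ordE; case: (eqVneq i i') => [->|_] //=; rewrite ltxx.
    subst i'; rewrite /om' /=; apply: H1; first exact: omM.
    apply: H2 => //; apply: lt_le_trans hzz _; rewrite lee_fin ge_min lexx //.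
  have dC0b (l : L) (i : ordR R n.+1) : (dC0 M (omega l) (om' (l, i)) <= (ds / 2)%:E)%E.
    by apply: dC0_le => z Mz; rewrite /om' /=; apply: Fimv; exact: omM.
  have dH : dH_le M omega om' ds.
    split.
      move=> l eta eta0; exists (l, ord0).
      by apply: le_lt_trans (dC0b l ord0) _; rewrite lte_fin; lra.
    move=> [l i] eta eta0; exists l.
    by apply: le_lt_trans (dC0b l i) _; rewrite lte_fin; lra.
  have comp (m : nat) : (dC0 M (omega (sigma m)) (om' (sig' m)) < ds%:E)%E.
    by apply: le_lt_trans (dC0b _ _) _; rewrite lte_fin; lra.
  have [h [hC hconj _]] := Hs _ om' ifs' dH sigma sig' comp.
  have orbit j : (j <= n)%N -> compo om' sig' j (x 0%N) = x j.
    elim: j => [|j IH] jn //=.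
    rewrite IH ?(ltnW jn) // /om' /sig' /= jn /Fi inordK //.
    by case: (HPhi j).
  exists (h (x 0%N)); split; first by apply: hC.1; exact: xM.
  move=> j jn.
  have := dC0_pt (compo omega sigma j \o h) (compo om' sig' j) (xM 0%N).
  rewrite /= orbit // => hle.
  exact: le_lt_trans hle (hconj j).
have /choice [Y HY] := Yn.
have YM n : M (Y n) by case: (HY n).
have [y [My cly]] : exists y, M y /\ forall tau, 0 < tau -> forall K,
    exists n, (K <= n)%N /\ `|y - Y n| < tau.
  have PF : ProperFilter (Y @ \oo) by apply: fmap_proper_filter.
  have FM : (Y @ \oo) M by exists 0%N => // n _; exact: YM.
  case: (cM _ PF FM).
  - move=> y [My cl]; exists y; split => // tau tau0 K.
    have FA : (Y @ \oo) [set Y n | n in [set n | (K <= n)%N]].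
      by apply: filterS (nbhs_infty_ge K) => n Kn; exists n.
    have := cl _ (ball y tau) FA (nbhsx_ballx y tau tau0).
    case => _ [[n Kn <-] byn]; exists n; split => //.
    by move: byn; rewrite -ball_normE.
exists y => //.
move=> j.
have [th th0 Hc] := compo_cont sigma ifs j My eps20.
have [tau tau0 Hl] := loc_d emb My th0.
have [n [jn yn]] := cly tau tau0 j.
have h1 := (HY n).2 j jn.
have h2 := Hc _ (YM n) (Hl _ (YM n) yn).1.
have h3 := d_tri_lt h2 h1.
rewrite -(splitr eps) in h3.
exact: d_sym_lt h3.
Qed.
End Main.

Unset Implicit Arguments. Set Strict Implicit.

Theorem theorem2 (R : realType) (N k : nat) (M : set 'rV[R]_N)
    (L : metricType R) (omega : L -> 'rV[R]_N -> 'rV[R]_N) :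
  embedded_submanifold N k M -> compact M ->
  IFS M omega -> topologically_stable M omega ->
  concordant_shadowing M omega.
Proof.
exact: (@main R N M k L omega).
Qed.
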